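(* Let $X=\{1,\dots,n\}$, $Y$ finite, $Q$ a symmetric irreducible stochastic matrix on $Y$ (notation in context). Let $2\le k\le n-1$, let $\underline a=(a_0,\dots,a_m)$ be a type with $a_0+\cdots+a_m=k+1$ and $a_0\ge1$, $\underline a'=(a_0-1,a_1,\dots,a_m)$, $A\subseteq X$ with $|A|=k$, and $F\in P_{k,\underline a',A}$. Then $$D_{k+1,\underline a}D^*_{k+1,\underline a}F-D^*_{k,\underline a'}D_{k,\underline a'}F=|Y|\,(n+\ell(\underline a)-2k)\,F.$$
   Context: $Q$ acts on $L(Y)$ by $(Qf)(y)=\sum_{y'}q(y,y')f(y')$, with distinct eigenvalues $\lambda_0=1,\dots,\lambda_m$ and eigenspaces $W_0$ (constants), $W_1,\dots,W_m$. $\Theta_k$: functions $\theta$ with $\mathrm{dom}(\theta)$ a $k$-subset of $X$ and values in $Y$; $\varphi\subseteq\theta$ means $\mathrm{dom}\varphi\subseteq\mathrm{dom}\theta$ and $\theta|_{\mathrm{dom}\varphi}=\varphi$. $D_k:L(\Theta_k)\to L(\Theta_{k-1})$, $(D_kF)(\varphi)=\sum_{\theta\supseteq\varphi}F(\theta)$; $D_k^*:L(\Theta_{k-1})\to L(\Theta_k)$, $(D_k^*F)(\theta)=\sum_{\varphi\subseteq\theta}F(\varphi)$. Types $\underline b=(b_0,\dots,b_m)$ of nonnegative integers, $\ell(\underline b)=b_1+\cdots+b_m$, $\underline b'=(b_0-1,b_1,\dots,b_m)$. A fundamental function of type $\underline b$ on a $k$-set $A$ is $F=\bigotimes_{j\in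 A}F^j$ ($F(\theta)=\prod_{j\in A}F^j(\theta(j))$ on $Y^A$, $0$ elsewhere) with each $F^j$ in some $W_{i_j}$ and exactly $b_i$ indices with $i_j=i$; $P_{k,\underline b,A}$ is their span, $P_{k,\underline b}=\bigoplus_AP_{k,\underline b,A}$ ($\{0\}$ if an entry is negative). $D_{k,\underline b}$ is $D_k$ restricted to $P_{k,\underline b}$ and $D^*_{k,\underline b}$ is $D^*_k$ restricted to $P_{k-1,\underline b'}$. *)

(* Defs.v *)
From HB Require Import structures.
From mathcomp Require Import all_boot all_order all_algebra.
From mathcomp Require Import reals.
Set Implicit Arguments. Unset Strict Implicit. Unset Printing Implicit Defensive.
Import Order.TTheory GRing.Theory Num.Theory.
Local Open Scope ring_scope.

(* A partial function theta : X -> Y with finite domain is encoded as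
   theta : {ffun 'I_n -> option Y}; Theta_k = those with #|pdom theta| = k.
   A function in L(Theta_k) is encoded as a function on all partial
   functions (it is only ever evaluated / nonzero on Theta_k). *)

Section Defs.
Variables (R : realType) (n : nat) (Y : finType).

Definition pfun := {ffun 'I_n -> option Y}.

Definition pdom (th : pfun) : {set 'I_n} := [set j | th j != None].

Definition psub (phi th : pfun) : bool :=
  [forall j, (phi j != None) ==> (phi j == th j)].

Definition Dop (k : nat) (F : pfun -> R) : pfun -> R :=
  fun phi => if #|pdom phi|.+1 == k then
               \sum_(th : pfun | (#|pdom th| == k) && psub phi th) F th
             else 0.

Definition Dstar (k : nat) (F : pfun -> R) : pfun -> R :=
  fun th => if #|pdom th| == k then
              \sum_(phi : pfun | (#|pdom phi|.+1 == k) && psub phi th) F phi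
            else 0.

Definition Qact (q : Y -> Y -> R) (f : Y -> R) : Y -> R :=
  fun y => \sum_(y' : Y) q y y' * f y'.

Fixpoint qpow (q : Y -> Y -> R) (t : nat) : Y -> Y -> R :=
  match t with
  | 0 => fun y y' => if y == y' then 1 else 0
  | t'.+1 => fun y y' => \sum_(z : Y) qpow q t' y z * q z y'
  end.

Definition symmetric_stochastic_irreducible (q : Y -> Y -> R) : Prop :=
  [/\ (forall y y', 0 <= q y y'),
      (forall y, \sum_(y' : Y) q y y' = 1),
      (forall y y', q y y' = q y' y) &
      (forall y y', exists t, 0 < qpow q t y y')].

Definition eigen_enum (q : Y -> Y -> R) (m : nat) (lam : 'I_m.+1 -> R) : Prop :=
  [/\ injective lam,
      lam ord0 = 1,
      (forall i, exists f : Y -> R, (exists y, f y != 0) /\ Qact q f = (fun y => lam i * f y)) &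
      (forall (mu : R) (f : Y -> R), (exists y, f y != 0) ->
          Qact q f = (fun y => mu * f y) -> exists i, mu = lam i)].

Definition inW (q : Y -> Y -> R) (m : nat) (lam : 'I_m.+1 -> R) (i : 'I_m.+1)
  (f : Y -> R) : Prop := Qact q f = (fun y => lam i * f y).

Definition fundamental (q : Y -> Y -> R) (m : nat) (lam : 'I_m.+1 -> R)
  (b : 'I_m.+1 -> nat) (A : {set 'I_n}) (F : pfun -> R) : Prop :=
  exists (idx : 'I_n -> 'I_m.+1) (fam : 'I_n -> Y -> R),
    [/\ (forall j, j \in A -> inW q lam (idx j) (fam j)),
        (forall i, #|[set j in A | idx j == i]| = b i) &
        (forall th : pfun, F th =
           if pdom th == A then
             \prod_(j in A) (match th j with Some y => fam j y | None => 0 end)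
           else 0)].

(* P_{k,b,A}: the linear span of fundamental functions of type b on A
   (k = #|A| is implicit in A) *)
Definition inP (q : Y -> Y -> R) (m : nat) (lam : 'I_m.+1 -> R)
  (b : 'I_m.+1 -> nat) (A : {set 'I_n}) (F : pfun -> R) : Prop :=
  exists (N : nat) (fs : 'I_N -> pfun -> R) (c : 'I_N -> R),
    (forall l, fundamental q lam b A (fs l)) /\
    (forall th, F th = \sum_(l < N) c l * fs l th).

End Defs.

Definition ell (m : nat) (b : 'I_m.+1 -> nat) : nat :=
  \sum_(i < m.+1 | i != ord0) b i.

Definition tprime (m : nat) (b : 'I_m.+1 -> nat) : 'I_m.+1 -> nat :=
  fun i => if i == ord0 then (b i).-1 else b i.

(* Main.v *)
Require Import Defs.
From HB Require Import structures.
From mathcomp Require Import all_boot all_order all_algebra.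
From mathcomp Require Import reals ring lra.
Import Order.TTheory GRing.Theory Num.Theory.
Local Open Scope ring_scope.
Set Implicit Arguments. Unset Strict Implicit. Unset Printing Implicit Defensive.

Section Comb.
Variables (n : nat) (Y : finType).
Local Notation pf := (pfun n Y).

Definition upd (f : pf) (x : 'I_n) (v : option Y) : pf :=
  [ffun j => if j == x then v else f j].

Lemma updE (f : pf) x v j : upd f x v j = if j == x then v else f j.
Proof. by rewrite ffunE. Qed.

Lemma pdom_upd_Some (f : pf) x y : pdom (upd f x (Some y)) = x |: pdom f.
Proof.
by apply/setP=> j; rewrite /pdom !inE updE; case: (j =P x).
Qed.

Lemma pdom_upd_None (f : pf) x : pdom (upd f x None) = pdom f :\ x.
Proof.
by apply/setP=> j; rewrite /pdom !inE updE; case: (j =P x).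
Qed.

Lemma psubP (phi th : pf) :
  reflect (forall j, phi j != None -> phi j = th j) (psub phi th).
Proof.
apply: (iffP forallP) => H j.
  by move=> Hj; apply/eqP; move: (H j); rewrite Hj.
by apply/implyP => /H ->.
Qed.

Lemma psub_dom (phi th : pf) : psub phi th -> pdom phi \subset pdom th.
Proof.
move/psubP=> H; apply/subsetP=> j; rewrite !inE => Hj.
by rewrite -(H j Hj).
Qed.

Lemma up_set (phi : pf) :
  [set th : pf | (#|pdom th| == #|pdom phi|.+1) && psub phi th] =
  [set upd phi p.1 (Some p.2) | p in [set p : 'I_n * Y | p.1 \notin pdom phi]].
Proof.
apply/setP=> th; rewrite inE; apply/idP/idP.
- case/andP=> /eqP Hc Hs.
  have Hsub := psub_dom Hs.
  have : #|pdom th :\: pdom phi| == 1%N.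
    by rewrite cardsD (setIidPr Hsub) Hc subSnn.
  case/cards1P=> x Hx.
  have xin : x \in pdom th :\: pdom phi by rewrite Hx set11.
  move: (xin); rewrite !inE => /andP[xnphi]; case Ex: (th x) => [y|] // _.
  apply/imsetP; exists (x, y); first by rewrite !inE.
  apply/ffunP=> j; rewrite updE /=.
  case: eqP => [->|/eqP jx]; first by rewrite Ex.
  case Pj: (phi j) => [z|].
    by move/psubP: Hs => /(_ j); rewrite Pj => ->.
  case Tj: (th j) => [w|] //.
  have : j \in pdom th :\: pdom phi by rewrite !inE Pj Tj.
  by rewrite Hx inE (negbTE jx).
- case/imsetP=> [[x y]]; rewrite inE /= => xn ->.
  rewrite pdom_upd_Some cardsU1 xn eqxx /=.
  apply/psubP=> j Hj; rewrite updE; case: eqP => // jx.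
  by move: xn; rewrite inE -jx Hj.
Qed.

Lemma sum_up (R : realType) (phi : pf) (H : pf -> R) :
  \sum_(th : pf | (#|pdom th| == #|pdom phi|.+1) && psub phi th) H th =
  \sum_(x in ~: pdom phi) \sum_(y : Y) H (upd phi x (Some y)).
Proof.
rewrite (eq_bigl (fun th => th \in [set th : pf | (#|pdom th| == #|pdom phi|.+1) && psub phi th])); last by move=> th; rewrite inE.
rewrite up_set big_imset /=.
  rewrite pair_big_dep /=; apply: eq_bigl => -[x y]; by rewrite !inE andbT.
move=> [x1 y1] [x2 y2]; rewrite !inE /= => n1 n2 E.
have := congr1 (fun f : pf => f x1) E; rewrite /= !updE eqxx.
case: eqP => [<-|_]; first by case=> ->.
by move: n1 => /negPn /eqP ->.
Qed.

Lemma down_set (th : pf) :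
  [set ps : pf | (#|pdom ps|.+1 == #|pdom th|) && psub ps th] =
  [set upd th x None | x in pdom th].
Proof.
apply/setP=> ps; rewrite inE; apply/idP/idP.
- case/andP=> /eqP Hc Hs.
  have Hsub := psub_dom Hs.
  have : #|pdom th :\: pdom ps| == 1%N.
    by rewrite cardsD (setIidPr Hsub) -Hc subSnn.
  case/cards1P=> x Hx.
  have xin : x \in pdom th :\: pdom ps by rewrite Hx set11.
  move: (xin); rewrite inE => /andP[xnps xth].
  apply/imsetP; exists x => //.
  apply/ffunP=> j; rewrite updE.
  case: eqP => [->|/eqP jx]; first by move: xnps; rewrite inE => /negPn /eqP.
  case Pj: (ps j) => [z|].
    by move/psubP: Hs => /(_ j); rewrite Pj => ->.
  case Tj: (th j) => [w|] //.
  have : j \in pdom th :\: pdom ps by rewrite !inE Pj Tj.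
  by rewrite Hx inE (negbTE jx).
- case/imsetP=> x xin ->.
  rewrite pdom_upd_None (cardsD1 x (pdom th)) xin eqxx /=.
  by apply/psubP=> j; rewrite updE; case: (j =P x).
Qed.

Lemma sum_down (R : realType) (th : pf) (H : pf -> R) :
  \sum_(ps : pf | (#|pdom ps|.+1 == #|pdom th|) && psub ps th) H ps =
  \sum_(x in pdom th) H (upd th x None).
Proof.
rewrite (eq_bigl (fun ps => ps \in [set ps : pf | (#|pdom ps|.+1 == #|pdom th|) && psub ps th])); last by move=> ps; rewrite inE.
rewrite down_set big_imset //.
move=> x1 x2 i1 i2 E; apply/eqP; apply/negPn/negP => ne.
have := congr1 (fun f : pf => f x1) E; rewrite /= !updE eqxx (negbTE ne).
by move: i1; rewrite inE => /[swap] <-.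
Qed.

Lemma upd_upd_same (f : pf) x v w : upd (upd f x v) x w = upd f x w.
Proof. by apply/ffunP=> j; rewrite !updE; case: eqP. Qed.

Lemma upd_upd_comm (f : pf) x x' v w : x != x' ->
  upd (upd f x v) x' w = upd (upd f x' w) x v.
Proof.
move=> ne; apply/ffunP=> j; rewrite !updE.
case: (j =P x) => [->|]; last by [].
by rewrite (negbTE ne).
Qed.

Lemma upd_id (f : pf) x : f x = None -> upd f x None = f.
Proof. by move=> E; apply/ffunP=> j; rewrite updE; case: (j =P x) => [->|]. Qed.

Lemma term1 (R : realType) (G : pf -> R) (phi : pf) :
  Dop (#|pdom phi|.+1) (Dstar (#|pdom phi|.+1) G) phi =
  \sum_(x in ~: pdom phi) \sum_(y : Y)
     (G phi + \sum_(x' in pdom phi) G (upd (upd phi x' None) x (Some y))).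
Proof.
rewrite /Dop /= eqxx sum_up.
apply: eq_bigr => x; rewrite inE => xn; apply: eq_bigr => y _.
have Hc : #|pdom (upd phi x (Some y))| = #|pdom phi|.+1.
  by rewrite pdom_upd_Some cardsU1 xn.
rewrite /Dstar Hc eqxx -{1}Hc sum_down pdom_upd_Some big_setU1 //=.
rewrite upd_upd_same upd_id; last by move: xn; rewrite inE => /negPn/eqP.
congr (_ + _); apply: eq_bigr => x' x'in.
rewrite (upd_upd_comm phi (x:=x) (x':=x')) //.
by apply/eqP => ex; move: xn; rewrite ex x'in.
Qed.

Lemma term2 (R : realType) (G : pf -> R) (phi : pf) :
  Dstar (#|pdom phi|) (Dop (#|pdom phi|) G) phi =
  \sum_(x' in pdom phi) (\sum_(y : Y) G (upd phi x' (Some y)) +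
   \sum_(x in ~: pdom phi) \sum_(y : Y) G (upd (upd phi x' None) x (Some y))).
Proof.
rewrite {1}/Dstar eqxx sum_down.
apply: eq_bigr => x' x'in.
have Hc : #|pdom (upd phi x' None)|.+1 = #|pdom phi|.
  by rewrite pdom_upd_None (cardsD1 x' (pdom phi)) x'in.
rewrite /Dop Hc eqxx -{1}Hc sum_up.
have -> : ~: pdom (upd phi x' None) = x' |: ~: pdom phi.
  by rewrite pdom_upd_None; apply/setP=> j; rewrite !inE negb_and negbK; case: (j =P x').
rewrite big_setU1 /=; last by rewrite inE x'in.
by congr (_ + _); apply: eq_bigr => y _; rewrite upd_upd_same.
Qed.

End Comb.

Lemma key (R : realType) (n : nat) (Y : finType) (G : pfun n Y -> R) (phi : pfun n Y) :
  Dop (#|pdom phi|.+1) (Dstar (#|pdom phi|.+1) G) phi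
  - Dstar (#|pdom phi|) (Dop (#|pdom phi|) G) phi =
  (n - #|pdom phi|)%:R * #|Y|%:R * G phi
  - \sum_(x in pdom phi) \sum_(y : Y) G (upd phi x (Some y)).
Proof.
rewrite term1 term2.
under eq_bigr do rewrite big_split /=.
rewrite big_split /= big_split /=.
have -> : \sum_(i in ~: pdom phi) \sum_(i0 : Y) \sum_(x' in pdom phi) G (upd (upd phi x' None) i (Some i0)) =
   \sum_(x' in pdom phi) \sum_(i in ~: pdom phi) \sum_(i0 : Y) G (upd (upd phi x' None) i (Some i0)).
  under eq_bigr do rewrite exchange_big /=.
  by rewrite exchange_big.
have -> : \sum_(i in ~: pdom phi) \sum_(i0 : Y) G phi = (G phi *+ #|Y|) *+ #|~: pdom phi|.
  by rewrite (eq_bigr (fun _ => G phi *+ #|Y|)) ?sumr_const // => *; rewrite sumr_const card_ord.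
rewrite cardsCs card_ord -mulrnA.
rewrite setCK.
rewrite opprD addrACA addrN addr0; congr (_ - _).
by rewrite -natrM mulr_natl mulnC.
Qed.

Section Alg.
Variables (R : realType) (Y : finType) (q : Y -> Y -> R).

Lemma harm (f : Y -> R) :
  (forall y y', 0 <= q y y') -> (forall y, \sum_(y' : Y) q y y' = 1) ->
  (forall y y', exists t, 0 < qpow q t y y') ->
  (forall y, \sum_(y' : Y) q y y' * f y' = f y) -> forall y1 y2, f y1 = f y2.
Proof.
move=> q0 q1 qirr hf y1 y2.
case: (@arg_maxP _ _ _ y1 xpredT f isT) => y0 _ Hmax.
have step : forall z y', f z = f y0 -> 0 < q z y' -> f y' = f y0.
  move=> z y' fz qz.
  have S0 : \sum_(w : Y) q z w * (f y0 - f w) = 0.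
    under eq_bigr do rewrite mulrBr.
    by rewrite sumrB -mulr_suml q1 mul1r hf fz subrr.
  have nn : forall w, xpredT w -> 0 <= q z w * (f y0 - f w).
    by move=> w _; rewrite mulr_ge0 // subr_ge0; exact: Hmax.
  have := @psumr_eq0P R Y xpredT _ nn S0 y' isT.
  move=> /eqP; rewrite mulf_eq0 => /orP[/eqP qz0|].
    by move: qz; rewrite qz0 ltxx.
  by rewrite subr_eq0 => /eqP.
have reach : forall t y', 0 < qpow q t y0 y' -> f y' = f y0.
  elim=> [|t IH] y' /=.
    by case: (y0 =P y') => [<- //|_]; rewrite ltxx.
  move=> Hs.
  case: (pickP (fun z => 0 < qpow q t y0 z * q z y')) => [z Hz|H0]; last first.
    have : \sum_(z : Y) qpow q t y0 z * q z y' <= 0.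
      by apply: sumr_le0 => z _; rewrite leNgt H0.
    by rewrite leNgt Hs.
  have qz : 0 < q z y'.
    rewrite lt_def q0 andbT; apply/eqP => E; by move: Hz; rewrite E mulr0 ltxx.
  move: Hz; rewrite pmulr_lgt0 // => /IH fz.
  exact: step fz qz.
case: (qirr y0 y1) => t1 /reach ->.
by case: (qirr y0 y2) => t2 /reach ->.
Qed.

Lemma sum_eig (f : Y -> R) (mu : R) :
  (forall y, \sum_(y' : Y) q y y' = 1) -> (forall y y', q y y' = q y' y) ->
  Qact q f = (fun y => mu * f y) -> mu != 1 -> \sum_(y : Y) f y = 0.
Proof.
move=> q1 qs hf mu1.
have E : \sum_(y : Y) Qact q f y = \sum_(y : Y) f y.
  rewrite /Qact exchange_big /=; apply: eq_bigr => y' _.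
  by rewrite -mulr_suml (eq_bigr _ (fun y _ => qs y y')) q1 mul1r.
move: E; rewrite hf -mulr_sumr => /eqP.
rewrite -subr_eq0 -{2}(mul1r (\sum_y f y)) -mulrBl mulf_eq0 subr_eq0 (negbTE mu1) /=.
by move/eqP.
Qed.
End Alg.

Lemma fam_sum (R : realType) (Y : finType) (q : Y -> Y -> R) (m : nat) (lam : 'I_m.+1 -> R)
  (i : 'I_m.+1) (f : Y -> R) (y0 : Y) :
  symmetric_stochastic_irreducible q -> eigen_enum q lam -> inW q lam i f ->
  \sum_(y : Y) f y = (i == ord0)%:R * #|Y|%:R * f y0.
Proof.
case=> q0 q1 qs qirr [linj l0 _ _] hw.
case: (i =P ord0) => [ei|ne].
  rewrite mul1r; have hf : forall y, \sum_(y' : Y) q y y' * f y' = f y.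
    move=> y; have := congr1 (fun g => g y) hw; rewrite /Qact /= ei l0 mul1r.
    by [].
  rewrite (eq_bigr (fun _ => f y0)); last by move=> y _; exact: (harm q0 q1 qirr hf).
  by rewrite sumr_const mulr_natl.
rewrite mul0r mul0r; apply: (sum_eig q1 qs hw).
by apply/eqP => E; apply: ne; apply: linj; rewrite E l0.
Qed.

Lemma fund_sum (R : realType) (n : nat) (Y : finType) (q : Y -> Y -> R) (m : nat)
  (lam : 'I_m.+1 -> R) (b : 'I_m.+1 -> nat) (A : {set 'I_n}) (F : pfun n Y -> R)
  (phi : pfun n Y) :
  symmetric_stochastic_irreducible q -> eigen_enum q lam ->
  fundamental q lam b A F -> pdom phi = A ->
  \sum_(j in pdom phi) \sum_(y : Y) F (upd phi j (Some y)) = (b ord0)%:R * #|Y|%:R * F phi.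
Proof.
move=> hq he [idx [fam [H1 H2 H3]]] phiA.
pose M (th : pfun n Y) i := match th i with Some y => fam i y | None => 0 end.
have step : forall j, j \in A ->
   \sum_(y : Y) F (upd phi j (Some y)) = (idx j == ord0)%:R * #|Y|%:R * F phi.
  move=> j jA.
  have : j \in pdom phi by rewrite phiA.
  rewrite inE; case Ej: (phi j) => [y0|] // _.
  have dA : forall y, pdom (upd phi j (Some y)) == A.
    move=> y; rewrite pdom_upd_Some phiA; apply/eqP/setP => i; rewrite !inE.
    by case: (i =P j) => // ->.
  rewrite H3 phiA eqxx (bigD1 j) //= Ej.
  have -> : \prod_(i in A | i != j) M phi i = \prod_(i in A | i != j) (match phi i with Some y => fam i y | None => 0 end) by [].
  under eq_bigr => y _.
    rewrite H3 dA (bigD1 j) //= updE eqxx.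
    rewrite (eq_bigr (fun i => M phi i)); last first.
      by move=> i /andP[_ ne]; rewrite /M updE (negbTE ne).
    over.
  rewrite -mulr_suml (fam_sum y0 hq he (H1 j jA)) /M.
  by rewrite !mulrA.
rewrite phiA (eq_bigr _ (fun j jA => eq_bigr _ (fun y _ => erefl _))).
rewrite (eq_bigr _ step).
rewrite -(H2 ord0).
rewrite (eq_bigr (fun j => (idx j == ord0)%:R * (#|Y|%:R * F phi))); last by move=> *; rewrite mulrA.
rewrite -mulr_suml -natr_sum mulrA; congr (_ * _ * _).
congr (_ %:R).
rewrite -[RHS]sum1_card (eq_bigl (fun j => (j \in A) && (idx j == ord0))); last by move=> j; rewrite inE.
by rewrite big_mkcondr; apply: eq_bigr => j _; case: (idx j == ord0).
Qed.
Unset Implicit Arguments.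

Theorem corollary7p6 (R : realType) (n : nat) (Y : finType)
  (q : Y -> Y -> R) (m : nat) (lam : 'I_m.+1 -> R)
  (k : nat) (a : 'I_m.+1 -> nat) (A : {set 'I_n}) (F : pfun n Y -> R) :
  symmetric_stochastic_irreducible q ->
  eigen_enum q lam ->
  (2 <= k)%N -> (k <= n.-1)%N ->
  (\sum_(i < m.+1) a i)%N = k.+1 ->
  (1 <= a ord0)%N ->
  #|A| = k ->
  inP q lam (tprime a) A F ->
  forall th : pfun n Y,
    Dop (k.+1) (Dstar (k.+1) F) th - Dstar k (Dop k F) th
    = #|Y|%:R * ((n + ell a)%:R - (2 * k)%:R) * F th.
Proof.
move=> hq he k2 kn hsum a1 cA [N [fs [c [Hf HF]]]] th.
have Fz : forall th', pdom th' != A -> F th' = 0.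
  move=> th' ne; rewrite HF big1 // => l _.
  case: (Hf l) => idx [fam [_ _ H3]]; by rewrite H3 (negbTE ne) mulr0.
case: (#|pdom th| =P k) => Hk; last first.
  rewrite /Dop /Dstar eqSS.
  have -> : (#|pdom th| == k) = false by apply/eqP.
  rewrite subrr Fz ?mulr0 //; apply/eqP => E; apply: Hk; by rewrite E.
have HS : \sum_(j in pdom th) \sum_(y : Y) F (upd th j (Some y)) =
          ((a ord0).-1)%:R * #|Y|%:R * F th.
  case: (pdom th =P A) => hA; last first.
    rewrite Fz; last by apply/eqP.
    rewrite mulr0 big1 // => j jin; rewrite big1 // => y _; apply: Fz.
    rewrite pdom_upd_Some; apply/eqP => E; apply: hA; rewrite -E.
    by apply/setP => i; rewrite in_setU1; case: (i =P j) => [->|] /=; rewrite ?jin.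
  under eq_bigr do under eq_bigr do rewrite HF.
  under eq_bigr do rewrite exchange_big /=.
  rewrite exchange_big /= HF mulr_sumr; apply: eq_bigr => l _.
  have := fund_sum hq he (Hf l) hA.
  rewrite /tprime eqxx => H; rewrite mulrCA -H.
  rewrite mulr_sumr; apply: eq_bigr => j _; by rewrite mulr_sumr.
rewrite -Hk key HS.
have Kn : (#|pdom th| <= n)%N by have := max_card (pdom th); rewrite card_ord.
have He : (a ord0 + ell a)%N = k.+1 by rewrite -hsum (bigD1 ord0).
have He' : (ell a)%:R = (#|pdom th|%:R + 1) - (a ord0)%:R :> R.
  by rewrite Hk natr1 -He natrD addrC addKr.
rewrite natrB // natrD He' natrM -subn1 natrB // .
ring.
Qed.
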